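(* Let $n \ge 1$ and let $x, y$ be valid Fibonacci representations of the same length. (i) If $D(x,y) \le -n-1$, then $D(x',y') \le -n-1$ for all valid right extensions $x'$ of $x$ and $y'$ of $y$ with $|x'| = |y'|$. (ii) If $D(x,y) \ge 2n$, then $D(x',y') \ge n$ for all valid right extensions $x'$ of $x$ and $y'$ of $y$ with $|x'|=|y'|$. Consequently, for $0 \le c < n$, if $D(x,y) \notin [-n, 2n-1]$ then no pair of such right extensions satisfies $[y'] = n[x'] + c$.
   Context: For a binary word $x = x_1\cdots x_\ell$, $[x] = \sum_{j=1}^{\ell} x_j F_{\ell-j+2}$ where $F_0=0,F_1=1,F_k=F_{k-1}+F_{k-2}$. A valid Fibonacci representation is a binary word with no factor $11$ (leading zeros allowed). A word $z$ is a valid right extension of $x$ if $x$ is a prefix of $z$ and $z$ contains no $11$. For words $u,v$, $D(u,v) = [v] - n[u]$. *)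

(* Defs.v *)
From mathcomp Require Import all_boot all_order all_algebra.
Set Implicit Arguments. Unset Strict Implicit. Unset Printing Implicit Defensive.
Import GRing.Theory Num.Theory.
Local Open Scope ring_scope.

Fixpoint fib (k : nat) : nat :=
  match k with
  | 0 => 0
  | 1 => 1
  | (k'.+1 as k1).+1 => fib k1 + fib k'
  end%N.

(* [x] = sum_{j=1}^{l} x_j F_{l-j+2}; with 0-based index i = j-1 this is F_{l-i+1}. *)
Definition fval (x : seq bool) : nat :=
  (\sum_(i < size x) nth false x i * fib (size x - i).+1)%N.

(* a binary word with no factor 11 (leading zeros allowed) *)
Definition valid (x : seq bool) : bool :=
  ~~ has (fun i => nth false x i && nth false x i.+1) (iota 0 (size x)).

Definition valid_rext (x z : seq bool) : bool := prefix x z && valid z.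

Definition D (n : nat) (u v : seq bool) : int := (fval v)%:Z - (n * fval u)%N%:Z.

(* Main.v *)
Require Import Defs.
From mathcomp Require Import all_boot all_order all_algebra.
From mathcomp Require Import realalg ring lra zify.
Import Order.TTheory GRing.Theory Num.Theory.
Local Open Scope ring_scope.
Definition fsh (x : seq bool) : nat :=
  (\sum_(i < size x) nth false x i * fib (size x - i))%N.

Lemma fibSS k : fib k.+2 = (fib k.+1 + fib k)%N.
Proof. by []. Qed.

Lemma fval_rcons x (d : bool) : fval (rcons x d) = (fval x + fsh x + d)%N.
Proof.
rewrite /fval /fsh size_rcons big_ord_recr /= nth_rcons ltnn eqxx subSnn.
rewrite muln1 -big_split /=; congr (_ + _)%N; apply: eq_bigr => i _.
rewrite nth_rcons ltn_ord subSn ?(ltnW (ltn_ord i)) // -mulnDr; congr (_ * _)%N; by case: (size x - i).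
Qed.

Lemma fsh_rcons x (d : bool) : fsh (rcons x d) = (fval x + d)%N.
Proof.
rewrite /fval /fsh size_rcons big_ord_recr /= nth_rcons ltnn eqxx subSnn.
rewrite muln1; congr (_ + _)%N; apply: eq_bigr => i _.
by rewrite nth_rcons ltn_ord subSn ?(ltnW (ltn_ord i)).
Qed.

Section Real.
Variables (R : realFieldType) (p : R).
Hypotheses (hp : p * p = p + 1) (hp1 : 1 < p) (hp2 : p < 2).

Lemma divle {x y c : R} : x * p = y -> c * p <= y -> c <= x.
Proof. by move=> <-; rewrite ler_pM2r // (lt_trans ltr01 hp1). Qed.

Lemma divge {x y c : R} : x * p = y -> y <= c * p -> x <= c.
Proof. by move=> <-; rewrite ler_pM2r // (lt_trans ltr01 hp1). Qed.

Lemma fsh_bound x :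
  -1 <= (fval x)%:R - p * (fsh x)%:R <= p - 1.
Proof.
elim/last_ind: x => [|x d IH].
  by rewrite /fval /fsh /= !big_ord0 mulr0 subr0; rewrite ?mulr0n lerN10 /= subr_ge0 ltW.
move/andP: IH => [h1 h2].
set a : R := (fval x)%:R in h1 h2 *; set b : R := (fsh x)%:R in h1 h2 *.
have -> : (fval (rcons x d))%:R = a + b + (d : nat)%:R :> R by rewrite fval_rcons !natrD.
have -> : (fsh (rcons x d))%:R = a + (d : nat)%:R :> R by rewrite fsh_rcons !natrD.
have e1 : ((d : nat)%:R : R) <= 1 by case: d => /=; rewrite ?mulr1n ?mulr0n ?ler01.
have e0 : (0 : R) <= (d : nat)%:R := ler0n _ _.
set e : R := (d : nat)%:R in e0 e1 *.
have eq : (a + b + e - p * (a + e)) * p = - (a - p * b) - e.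
  have hp3 : p * (a + e) * p = (p + 1) * (a + e) by rewrite mulrC mulrA hp.
  by rewrite mulrBl hp3; ring.
apply/andP; split.
  by apply: (divle eq); lra.
apply: (divge eq); rewrite mulrBl hp; lra.
Qed.

Lemma intrn (m : nat) : (m%:Z)%:~R = m%:R :> R. Proof. by []. Qed.

Definition Dsh (n : nat) (u v : seq bool) : int := (fsh v)%:Z - (n * fsh u)%N%:Z.

Lemma key1 n x y : (1 <= n)%N -> D n x y <= - (n%:Z) - 1 -> Dsh n x y <= -1.
Proof.
move=> hn hD.
have /andP[hy1 hy2] := fsh_bound y; have /andP[hx1 hx2] := fsh_bound x.
move: hD; rewrite /D -(ler_int R) !rmorphB /= !rmorphN /= !intrn natrM => hD.
suffices : ((Dsh n x y)%:~R : R) < 0 by rewrite ltrz0; lia.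
rewrite /Dsh rmorphB /= !intrn natrM.
set A : R := (fval x)%:R in hx1 hx2 hD *; set B : R := (fval y)%:R in hy1 hy2 hD *.
set A' : R := (fsh x)%:R in hx1 hx2 hD *; set B' : R := (fsh y)%:R in hy1 hy2 hD *.
set N : R := n%:R in hD *.
have hN : 1 <= N by rewrite /N ler1n.
have h1 := ler_wpM2l (ler0n R n) hx2; rewrite -/N in h1.
have h2 : N * (p - 2) < 0 by rewrite pmulr_rlt0 ?subr_lt0 //; lra.
have h3 : p * (B' - N * A') < 0.
  have -> : p * (B' - N * A') = p * B' - N * (p * A') by ring.
  lra.
by move: h3; rewrite pmulr_rlt0 // (lt_trans ltr01 hp1).
Qed.

Lemma key2 n x y : (1 <= n)%N -> 2 * n%:Z <= D n x y -> 0 <= Dsh n x y.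
Proof.
move=> hn hD.
have /andP[hy1 hy2] := fsh_bound y; have /andP[hx1 hx2] := fsh_bound x.
move: hD; rewrite /D -(ler_int R) !rmorphB /= rmorphM /= !intrn natrM => hD.
rewrite -(ler_int R) /Dsh rmorphB /= !intrn natrM.
set A : R := (fval x)%:R in hx1 hx2 hD *; set B : R := (fval y)%:R in hy1 hy2 hD *.
set A' : R := (fsh x)%:R in hx1 hx2 hD *; set B' : R := (fsh y)%:R in hy1 hy2 hD *.
set N : R := n%:R in hD *.
have hN : 1 <= N by rewrite /N ler1n.
have h1 := ler_wpM2l (ler0n R n) hx1; rewrite -/N in h1.
have h3 : 0 <= p * (B' - N * A').
  have -> : p * (B' - N * A') = p * B' - N * (p * A') by ring.
  move: hD; rewrite /= ?intrn natrD mulr1n => hD.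
  have h4 : B - p + 1 <= p * B' by lra.
  have h5 : N * (p * A') <= N * A + N.
    move: h1; rewrite mulrN1 mulrBr; lra.
  have h6 : B - p + 1 - (N * A + N) <= p * B' - N * (p * A') by lra.
  have h7 : 0 < B - p + 1 - (N * A + N).
    have hp2' := hp2.
    have h8 : 0 < N + 1 - p by lra.
    have h9 : N + N <= B - N * A by move: hD; rewrite mulrDl mul1r.
    lra.
  lra.
by move: h3; rewrite pmulr_rge0 // (lt_trans ltr01 hp1).
Qed.
End Real.

Lemma D_rcons n X Y (d e : bool) :
  D n (rcons X d) (rcons Y e) = D n X Y + Dsh n X Y + (e : nat)%:Z - (n * d)%N%:Z.
Proof. rewrite /D /Dsh !fval_rcons; lia. Qed.

Lemma Dsh_rcons n X Y (d e : bool) :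
  Dsh n (rcons X d) (rcons Y e) = D n X Y + (e : nat)%:Z - (n * d)%N%:Z.
Proof. rewrite /D /Dsh !fsh_rcons; lia. Qed.

Lemma valid_rcons X d : valid (rcons X d) -> valid X && ~~ (last false X && d).
Proof.
rewrite /valid size_rcons => /hasPn H.
apply/andP; split.
  apply/hasPn => i; rewrite mem_iota add0n => /andP[_ hi].
  have := H i; rewrite mem_iota add0n ltnS (ltnW hi) => /(_ isT).
  rewrite !nth_rcons hi.
  case: (ltnP i.+1 (size X)) => h; first by [].
  by rewrite (nth_default false h) andbF.
case: X H => [|z X] H //=.
have := H (size X); rewrite mem_iota add0n /= ltnS leqnSn => /(_ isT).
set s := z :: X in H *.
have hs : (size X < size s)%N by [].
have := H (size X); rewrite mem_iota add0n => /(_ (leqW (ltnSn _))).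
rewrite (nth_rcons _ _ _ (size X)) hs (nth_rcons _ _ _ (size X).+1) ltnn eqxx.
by rewrite /s -(last_nth false).
Qed.

Section Main.
Variables (R : realFieldType) (p : R).
Hypotheses (hp : p * p = p + 1) (hp1 : 1 < p) (hp2 : p < 2).

Lemma part1 n x y u v : (1 <= n)%N -> size u = size v ->
  D n x y <= - (n%:Z) - 1 -> D n (x ++ u) (y ++ v) <= - (n%:Z) - 1.
Proof.
move=> hn; elim/last_ind: u v => [|u d IH] v.
  by case: v => // _ hD; rewrite !cats0.
case/lastP: v => [|v e]; first by rewrite size_rcons.
rewrite !size_rcons => /eqP; rewrite eqSS => /eqP hs hD.
have h := IH v hs hD.
have h' := @key1 R p hp hp1 hp2 _ _ _ hn h.
rewrite -!rcons_cat D_rcons.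
by case: d; case: e => /=; lia.
Qed.

Definition Inv n X Y :=
  [/\ n%:Z <= D n X Y, n%:Z <= D n X Y + Dsh n X Y &
      (~~ last false X -> 2 * n%:Z <= D n X Y + Dsh n X Y)].

Lemma part2 n x y u v : (1 <= n)%N -> size u = size v -> valid (x ++ u) ->
  2 * n%:Z <= D n x y -> Inv n (x ++ u) (y ++ v).
Proof.
move=> hn; elim/last_ind: u v => [|u d IH] v.
  case: v => // _ _ hD; rewrite !cats0.
  have h := @key2 R p hp hp1 hp2 _ _ _ hn hD.
  split; lia.
case/lastP: v => [|v e]; first by rewrite size_rcons.
rewrite !size_rcons => /eqP; rewrite eqSS => /eqP hs.
rewrite -!rcons_cat => /valid_rcons /andP[hv hl] hD.
have [h1 h2 h3] := IH v hs hv hD.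
rewrite /Inv D_rcons Dsh_rcons last_rcons.
move: hl h3; case: (last false (x ++ u)); case: d; case: e => /= hl h3; split; lia.
Qed.
End Main.

Lemma ex_phi : exists phi : realalg, phi * phi = phi + 1 /\ 1 < phi /\ phi < 2.
Proof.
set s := Num.sqrt (5:realalg).
have h0 : 0 <= s by rewrite sqrtr_ge0.
have h5 : s * s = 5 by rewrite -expr2 sqr_sqrtr // ler0n.
have h2 : 2 < s by nra.
have h3 : s < 3 by nra.
exists ((1 + s) / 2).
have e : ((1+s)/2)*((1+s)/2) - ((1+s)/2 + 1) = (s*s - 5)/4 by field.
split; first by apply/eqP; rewrite -subr_eq0 e h5 subrr mul0r.
split; lra.
Qed.

Theorem theorem11 (n : nat) (x y : seq bool) :
  (1 <= n)%N -> valid x -> valid y -> size x = size y ->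
  [/\ (D n x y <= - (n%:Z) - 1 ->
        forall x' y', valid_rext x x' -> valid_rext y y' -> size x' = size y' ->
          D n x' y' <= - (n%:Z) - 1),
      (D n x y >= 2 * n%:Z ->
        forall x' y', valid_rext x x' -> valid_rext y y' -> size x' = size y' ->
          D n x' y' >= n%:Z) &
      (forall c : nat, (c < n)%N ->
        ~ (- (n%:Z) <= D n x y <= 2 * n%:Z - 1) ->
        forall x' y', valid_rext x x' -> valid_rext y y' -> size x' = size y' ->
          (fval y')%:Z <> (n%:Z) * (fval x')%:Z + c%:Z)].
Proof.
move=> hn vx vy hs.
have [p [hp [hp1 hp2]]] := ex_phi.
have P1 : D n x y <= - (n%:Z) - 1 ->
        forall x' y', valid_rext x x' -> valid_rext y y' -> size x' = size y' ->
          D n x' y' <= - (n%:Z) - 1.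
  move=> hD x' y' /andP[/prefixP[u ->] _] /andP[/prefixP[v ->] _].
  rewrite !size_cat hs => /eqP; rewrite eqn_add2l => /eqP huv.
  exact: (@part1 _ _ hp hp1 hp2).
have P2 : D n x y >= 2 * n%:Z ->
        forall x' y', valid_rext x x' -> valid_rext y y' -> size x' = size y' ->
          D n x' y' >= n%:Z.
  move=> hD x' y' /andP[/prefixP[u ->] vu] /andP[/prefixP[v ->] _].
  rewrite !size_cat hs => /eqP; rewrite eqn_add2l => /eqP huv.
  by have [] := @part2 _ _ hp hp1 hp2 _ _ _ _ _ hn huv vu hD.
split => // c hc hnot x' y' hx hy hsz heq.
have hD' : D n x' y' = c%:Z.
  by rewrite /D heq PoszM addrAC subrr add0r.
case: (lerP (- (n%:Z)) (D n x y)) => h1.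
  case: (lerP (D n x y) (2 * n%:Z - 1)) => h2.
    by apply: hnot; rewrite h1 h2.
  have h3 : 2 * n%:Z <= D n x y.
    move: h2; set t := D n x y; clearbody t; move=> h2. lia.
  have := P2 h3 x' y' hx hy hsz; rewrite hD' => hh; clear -hc hh; lia.
have h3 : D n x y <= - (n%:Z) - 1.
  move: h1; set t := D n x y; clearbody t; move=> h1. lia.
have := P1 h3 x' y' hx hy hsz; rewrite hD' => hh; clear -hc hh; lia.
Qed.
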